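(* Let $\Gamma$ be a MaxSAT instance encoded with blocking variables, with $\mathrm{cost}(\Gamma)=k$, and let $A$ be the set of total assignments $\alpha\models\Gamma$ with $\mathrm{cost}(\alpha)=k$. Suppose every two distinct assignments in $A$ have Hamming distance at least $d$, and for every blocking variable $b$ there are $\alpha,\beta\in A$ with $\alpha(b)=0$, $\beta(b)=1$. Then every derivation in the cost-SPR calculus from $\Gamma$ that derives a unit clause $b$ for some blocking variable $b$ contains a clause introduced by the cost-SPR rule of width (number of literals) at least $d$.
   Context: Literals, clauses, CNFs (multisets of clauses), $\mathrm{Var}(\Gamma)$. A substitution $\sigma$ maps variables to $0$, $1$ or literals, extended by $\sigma(\lnot x)=\lnot\sigma(x)$; $(\sigma\circ\tau)(x)=\sigma(\tau(x))$. A (partial) assignment has $\sigma(x)\in\{0,1,x\}$; its domain is $\sigma^{-1}(\{0,1\})$; total means all variables assigned. $C{\upharpoonright}_\sigma$: apply $\sigma$ to literals and simplify; $\Gamma{\upharpoonright}_\sigma$ is the multiset of $C{\upharpoonright}_\sigma\ne1$, $C\in\Gamma$. $\lnot C$ is the partial assignment falsifying all literals of $C$. $\Gamma\vdash_1 C$ means unit propagation on $\Gamma{\upharpoonright}_{\lnot C}$ derives the empty clause; $\Gamma\vdash_1\Delta$ means this for all $D\in\Delta$. A MaxSAT instance encoded with blocking variables is a CNF $\Gamma=H\cup\{C_1\lor b_1,\dots,C_m\lor b_m\}$ with distinct fresh blocking variables $b_i$; $\mathrm{cost}(\alpha)=\sum_i\alpha(b_i)$; $\mathrm{cost}(\Gamma)=\min\{\mathrm{cost}(\alpha):\alpha\models\Gamma\}$.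 $C$ is cost-SPR w.r.t. $\Gamma$ if there is a partial assignment $\sigma$ with the same domain as $\lnot C$ such that (1) $\Gamma{\upharpoonright}_{\lnot C}\vdash_1(\Gamma\cup\{C\}){\upharpoonright}_\sigma$ and (2) $\mathrm{cost}(\tau\circ\sigma)\le\mathrm{cost}(\tau)$ for all total $\tau\supseteq\lnot C$. A cost-SPR calculus derivation from $\Gamma$: sequence $D_1,\dots,D_t$, each in $\Gamma$, or by weakening/resolution from earlier clauses, or cost-SPR w.r.t. $\Gamma\cup\{D_1,\dots,D_{i-1}\}$ with $\mathrm{Var}(D_i)\subseteq\mathrm{Var}(\Gamma)$. *)

(* Defs.v *)
From mathcomp Require Import all_boot.
Set Implicit Arguments.
Unset Strict Implicit.
Unset Printing Implicit Defensive.

(** Variables are natural numbers; a literal is (x, true) for x and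
    (x, false) for ~x.  Clauses are sequences of literals (read as sets for
    resolution/weakening; width = number of distinct literals). *)
Definition lit := (nat * bool)%type.
Definition clause := seq lit.
Definition cnf := seq clause.

Definition vars (F : cnf) : seq nat := undup (flatten [seq map fst C | C <- F]).

Inductive sval := SC of bool | SL of lit.
Definition subst := nat -> sval.

Definition subst_lit (s : subst) (l : lit) : sval :=
  match s l.1 with
  | SC b => SC (b == l.2)
  | SL (y, q) => SL (y, q == l.2)
  end.

Definition sv_true (v : sval) : bool := if v is SC true then true else false.
Definition sv_lit (v : sval) : option lit := if v is SL l then Some l else None.

(** C|_sigma : None stands for the constant 1 (satisfied clause);
    otherwise the falsified literals are removed. *)
Definition restrict_clause (s : subst) (C : clause) : option clause :=
  if has (fun l => sv_true (subst_lit s l)) C then None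
  else Some (pmap (fun l => sv_lit (subst_lit s l)) C).

Definition restrict (s : subst) (F : cnf) : cnf := pmap (restrict_clause s) F.

Definition tautological (C : clause) : bool := has (fun l => (l.1, ~~ l.2) \in C) C.

(** not C : the partial assignment falsifying all literals of C
    (only meaningful for non-tautological C). *)
Definition negC (C : clause) : subst := fun x =>
  if (x, true) \in C then SC false
  else if (x, false) \in C then SC true
  else SL (x, true).

Definition assign_lit (l : lit) : subst := fun x =>
  if x == l.1 then SC l.2 else SL (x, true).

Inductive UPref : cnf -> Prop :=
| UP_empty F : [::] \in F -> UPref F
| UP_unit F C l : C \in F -> undup C = [:: l] ->
    UPref (restrict (assign_lit l) F) -> UPref F.

(** F |-_1 D  (a tautological D is trivially implied: not D does not exist). *)
Definition rup (F : cnf) (D : clause) : Prop :=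
  tautological D \/ UPref (restrict (negC D) F).

(** Partial assignments: sigma(x) in {0,1,x}; domain = sigma^{-1}({0,1}). *)
Definition is_partial_assignment (s : subst) : Prop :=
  forall x, (exists b, s x = SC b) \/ s x = SL (x, true).
Definition in_domain (s : subst) (x : nat) : Prop := exists b, s x = SC b.

Definition total := nat -> bool.
Definition lit_val (a : total) (l : lit) : bool := a l.1 == l.2.
Definition sat (a : total) (F : cnf) : bool := all (fun C => has (lit_val a) C) F.

Definition comp_total (t : total) (s : subst) : total := fun x =>
  match s x with SC b => b | SL l => lit_val t l end.

Definition extends_negC (t : total) (C : clause) : Prop :=
  forall l, l \in C -> lit_val t l = false.

(** MaxSAT instance encoded with blocking variables:
    Gamma = H u { C_i \/ b_i }. *)
Record maxsat := MaxSAT { hard : cnf; soft : seq (clause * nat) }.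

Definition gamma (M : maxsat) : cnf :=
  hard M ++ [seq (s.2, true) :: s.1 | s <- soft M].
Definition blocking (M : maxsat) : seq nat := map snd (soft M).

Definition wf_maxsat (M : maxsat) : Prop :=
  uniq (blocking M) /\
  forall b, b \in blocking M -> b \notin vars (hard M ++ map fst (soft M)).

Definition cost (M : maxsat) (a : total) : nat :=
  sumn [seq nat_of_bool (a b) | b <- blocking M].

Definition is_cost (M : maxsat) (k : nat) : Prop :=
  (exists a, sat a (gamma M) /\ cost M a = k) /\
  (forall a, sat a (gamma M) -> k <= cost M a).

Definition cost_SPR (M : maxsat) (F : cnf) (C : clause) : Prop :=
  ~~ tautological C /\
  exists s : subst,
    is_partial_assignment s /\
    (forall x, in_domain s x <-> x \in map fst C) /\
    (forall D, D \in restrict s (F ++ [:: C]) -> rup (restrict (negC C) F) D) /\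
    (forall t : total, extends_negC t C -> cost M (comp_total t s) <= cost M t).

Inductive rule := RAxiom | RWeakening | RResolution | RCostSPR.

Definition valid_step (M : maxsat) (P : cnf) (D : clause) (r : rule) : Prop :=
  match r with
  | RAxiom => D \in gamma M
  | RWeakening => exists E, E \in P /\ {subset E <= D}
  | RResolution => exists E1 E2 x, E1 \in P /\ E2 \in P /\
      (x, true) \in E1 /\ (x, false) \in E2 /\
      D =i [seq l <- E1 | l != (x, true)] ++ [seq l <- E2 | l != (x, false)]
  | RCostSPR => cost_SPR M (gamma M ++ P) D /\
      {subset map fst D <= vars (gamma M)}
  end.

Definition dstep0 : clause * rule := ([::], RAxiom).

Definition derivation (M : maxsat) (ds : seq (clause * rule)) : Prop :=
  forall i, i < size ds ->
    valid_step M (map fst (take i ds)) (nth dstep0 ds i).1 (nth dstep0 ds i).2.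

Definition width (C : clause) : nat := size (undup C).

Definition in_A (M : maxsat) (k : nat) (a : total) : Prop :=
  sat a (gamma M) /\ cost M a = k.
Definition hamming (M : maxsat) (a b : total) : nat :=
  count (fun x => a x != b x) (vars (gamma M)).

(* Main.v *)
From Stdlib Require Import Classical_Prop.
Require Import Defs.
From mathcomp Require Import all_boot.

Lemma lit_val_comp t s l : lit_val (comp_total t s) l =
  match subst_lit s l with SC b => b | SL l' => lit_val t l' end.
Proof.
case: l => x p; rewrite /lit_val /comp_total /subst_lit /=.
case: (s x) => [b|[y q]] /=; first by case: b; case: p.
by rewrite /lit_val /=; case: (t y); case: q; case: p.
Qed.

Lemma has_comp_aux t s D : ~~ has (fun l : lit => sv_true (subst_lit s l)) D ->
  has (lit_val (comp_total t s)) D =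
  has (lit_val t) (pmap (fun l : lit => sv_lit (subst_lit s l)) D).
Proof.
elim: D => //= l D IH /norP[H1 H2].
rewrite IH // lit_val_comp.
by case E: (subst_lit s l) H1 => [[]|l'] //=.
Qed.

Lemma has_comp t s D : has (lit_val (comp_total t s)) D =
  if restrict_clause s D is Some D' then has (lit_val t) D' else true.
Proof.
rewrite /restrict_clause; case: ifP => [/hasP[l Hl Hs]|Hn].
  apply/hasP; exists l => //; rewrite lit_val_comp.
  by move: Hs; case: (subst_lit s l) => [[]|].
by apply: has_comp_aux; rewrite Hn.
Qed.

Lemma sat_restrict t s G : (forall x, comp_total t s x = t x) ->
  sat t G -> sat t (restrict s G).
Proof.
move=> Hx; elim: G => //= C G IH /andP[HC HG].
rewrite /restrict /=.
have HC' : has (lit_val (comp_total t s)) C.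
  by rewrite (eq_has (a2 := lit_val t)) // => l; rewrite /lit_val Hx.
rewrite has_comp in HC'.
case E: (restrict_clause s C) HC' => [D'|] /= H; last exact: IH.
by rewrite H; exact: IH.
Qed.

Lemma UP_sound G : UPref G -> forall t, ~~ sat t G.
Proof.
elim => [F HF|F C l HC Hu HUP IH] t; apply/negP => Hs.
  by have := allP Hs _ HF.
have /hasP[l' Hl' Hv] := allP Hs _ HC.
have : l' \in undup C by rewrite mem_undup.
rewrite Hu inE => /eqP El; subst l'.
have := IH t; rewrite sat_restrict //.
move=> x; rewrite /comp_total /assign_lit; case: eqP => [->|] //.
  by move: Hv; rewrite /lit_val => /eqP.
by rewrite /lit_val /=; case: (t x).
Qed.

Lemma comp_negC t C : extends_negC t C -> forall x, comp_total t (negC C) x = t x.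
Proof.
move=> Ht x; rewrite /comp_total /negC; case: ifP => H1.
  by move: (Ht _ H1); rewrite /lit_val /=; case: (t x).
case: ifP => H2.
  by move: (Ht _ H2); rewrite /lit_val /=; case: (t x).
by rewrite /lit_val /=; case: (t x).
Qed.

Lemma rup_sound G D t : rup G D -> sat t G -> has (lit_val t) D.
Proof.
case => [Htaut|Hup] Hs.
  move/hasP: Htaut => [l Hl Hl'].
  case E: (lit_val t l); first by apply/hasP; exists l.
  apply/hasP; exists (l.1, ~~ l.2) => //.
  by move: E; rewrite /lit_val /=; case: (t l.1); case: l.2.
apply/negPn/negP => Hn.
have Hext : extends_negC t D.
  by move=> l Hl; apply/negbTE; move/hasPn: Hn; apply.
by move: (UP_sound _ Hup t); rewrite sat_restrict //; exact: comp_negC.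
Qed.

Lemma size_undup_map (D : clause) : size (undup (map fst D)) <= size (undup D).
Proof.
rewrite -(size_map fst (undup D)).
apply: uniq_leq_size; first exact: undup_uniq.
move=> x; rewrite mem_undup => /mapP[l Hl ->]; apply: map_f.
by rewrite mem_undup.
Qed.

Theorem corollary5p4 (M : maxsat) (k d : nat) (ds : seq (clause * rule)) :
  wf_maxsat M ->
  is_cost M k ->
  (forall a b, in_A M k a -> in_A M k b -> hamming M a b != 0 ->
     d <= hamming M a b) ->
  (forall b, b \in blocking M ->
     exists a a', in_A M k a /\ in_A M k a' /\ a b = false /\ a' b = true) ->
  derivation M ds ->
  (exists b i, b \in blocking M /\ i < size ds /\
     (nth dstep0 ds i).1 =i [:: (b, true)]) ->
  exists i, i < size ds /\ (nth dstep0 ds i).2 = RCostSPR /\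
    d <= width (nth dstep0 ds i).1.
Proof.
move=> _ [_ Hopt] Hham Hbl Hder [b [i0 [Hb [Hi0 Hunit]]]].
apply: NNPP => Hno.
have step : forall i, i < size ds ->
    (forall a, in_A M k a -> sat a (map fst (take i ds))) ->
    forall a, in_A M k a -> has (lit_val a) (nth dstep0 ds i).1.
  move=> i Hi HP a Ha.
  have Hno' : (nth dstep0 ds i).2 = RCostSPR -> width (nth dstep0 ds i).1 < d.
    move=> Er; rewrite ltnNge; apply/negP => Hw; apply: Hno; by exists i.
  have Hv := Hder i Hi.
  have HPa := HP a Ha.
  move: Hv Hno'; case: (nth dstep0 ds i) => D r /=.
  move: (map fst (take i ds)) HPa => P HPa.
  case: r => /= Hv Hw.
  - by apply: (allP Ha.1).
  - case: Hv => E [HE Hsub].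
    have /hasP[l Hl Hv] := allP HPa _ HE.
    by apply/hasP; exists l => //; apply: Hsub.
  - case: Hv => E1 [E2 [x [H1 [H2 [Hx1 [Hx2 HD]]]]]].
    have /hasP[l1 Hl1 Hv1] := allP HPa _ H1.
    have /hasP[l2 Hl2 Hv2] := allP HPa _ H2.
    case Ea: (a x).
    + apply/hasP; exists l2 => //; rewrite HD mem_cat; apply/orP; right.
      rewrite mem_filter Hl2 andbT; apply/negP => /eqP E; subst l2.
      by move: Hv2; rewrite /lit_val /= Ea.
    + apply/hasP; exists l1 => //; rewrite HD mem_cat; apply/orP; left.
      rewrite mem_filter Hl1 andbT; apply/negP => /eqP E; subst l1.
      by move: Hv1; rewrite /lit_val /= Ea.
  - case: Hv => [[Hntaut [s [Hpa [Hdom [Hrup Hcost]]]]] Hvars].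
    have {}Hw := Hw erefl.
    apply/negPn/negP => Hn.
    have Hext : extends_negC a D.
      by move=> l Hl; apply/negbTE; move/hasPn: Hn; apply.
    set bb := comp_total a s.
    have HF : sat a (gamma M ++ P) by rewrite /sat all_cat; apply/andP; split => //; exact: Ha.1.
    have Hsat : sat bb ((gamma M ++ P) ++ [:: D]).
      apply/allP => C HC; rewrite has_comp.
      case E: (restrict_clause s C) => [D'|] //.
      apply: rup_sound (Hrup D' _) _.
        by rewrite /restrict mem_pmap -E; apply: map_f.
      by apply: sat_restrict => //; exact: comp_negC.
    have Hsg : sat bb (gamma M).
      by move: Hsat; rewrite /sat !all_cat => /andP[/andP[]].
    have HbA : in_A M k bb.
      split => //; apply/eqP; rewrite eqn_leq Hopt // andbT.
      by rewrite -Ha.2; apply: Hcost.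
    have Hdiff : forall x, a x != bb x -> x \in map fst D.
      move=> x; case: (Hpa x) => [[c Hc]|Hc].
        by move=> _; apply/Hdom; exists c.
      by rewrite /bb /comp_total Hc /lit_val /=; case: (a x).
    have Hh : hamming M a bb <= width D.
      rewrite /hamming -size_filter; apply: leq_trans (size_undup_map D).
      apply: uniq_leq_size; first by apply: filter_uniq; apply: undup_uniq.
      by move=> x; rewrite mem_filter mem_undup => /andP[/Hdiff].
    have H0 : hamming M a bb = 0.
      apply/eqP; apply/negP => /negP Hnz.
      have := Hham _ _ Ha HbA Hnz; rewrite leqNgt => /negP; apply.
      exact: leq_ltn_trans Hh Hw.
    have /hasP[l Hl Hvl] : has (lit_val bb) D.
      by apply: (allP Hsat); rewrite mem_cat mem_seq1 eqxx orbT.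
    have Hx : l.1 \in vars (gamma M) by apply: Hvars; apply: map_f.
    have Eq : a l.1 = bb l.1.
      move: H0; rewrite /hamming => /eqP; rewrite -leqn0 leqNgt -has_count.
      move/hasPn => /(_ _ Hx); by case: eqP.
    by move: (Hext _ Hl); rewrite /lit_val Eq -/(lit_val bb l) Hvl.
have inv : forall n, n <= size ds -> forall a, in_A M k a -> sat a (map fst (take n ds)).
  elim => [|n IH] Hn a Ha; first by rewrite take0.
  rewrite (take_nth dstep0 Hn) map_rcons /sat all_rcons; apply/andP; split.
    by apply: step => //; apply: IH; apply: ltnW.
  exact: IH (ltnW Hn) a Ha.
have [a [a' [Ha [_ [Hab _]]]]] := Hbl b Hb.
have /hasP[l Hl Hv] := step i0 Hi0 (inv i0 (ltnW Hi0)) a Ha.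
move: Hl; rewrite Hunit mem_seq1 => /eqP El; subst l.
by move: Hv; rewrite /lit_val /= Hab.
Qed.
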